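(* Let $(X,d)$ be a complete metric space and $(\mathbb{H}(X),h)$ the space of nonempty compact subsets of $X$ with the Hausdorff metric. For each $i\in\mathbb{N}$ let $\mathcal{F}_i=\{X; f_{1,i},\dots,f_{n_i,i}\}$ be a finite family of Lipschitz maps $f_{r,i}:X\to X$, with associated set map $\mathcal{F}_i(A)=\bigcup_{r=1}^{n_i} f_{r,i}(A)$ on $\mathbb{H}(X)$, and let $L_{\mathcal{F}_i}=\max_{1\le r\le n_i}\mathrm{Lip}(f_{r,i})$. Suppose $\lim_{k\to\infty}\prod_{i=1}^k L_{\mathcal{F}_i}=0$. Let $\Phi_k=\mathcal{F}_k\circ\cdots\circ\mathcal{F}_1$ and $\Psi_k=\mathcal{F}_1\circ\cdots\circ\mathcal{F}_k$. Then for all $A,B\in\mathbb{H}(X)$, $h(\Phi_k(A),\Phi_k(B))\to 0$ and $h(\Psi_k(A),\Psi_k(B))\to0$ as $k\to\infty$.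
   Context: The Hausdorff metric is $h(B,C)=\max\{d(B,C),d(C,B)\}$ with $d(B,C)=\sup_{b\in B}\inf_{c\in C}d(b,c)$. $\mathrm{Lip}(f)=\sup_{x\ne y}d(f(x),f(y))/d(x,y)$. *)

(* Defs.v *)
From HB Require Import structures.
From mathcomp Require Import all_boot all_order all_algebra.
From mathcomp Require Import all_classical all_reals all_analysis.
Set Implicit Arguments. Unset Strict Implicit. Unset Printing Implicit Defensive.
Import Order.TTheory GRing.Theory Num.Theory.
Import numFieldNormedType.Exports.
Local Open Scope classical_set_scope.
Local Open Scope ring_scope.

Section Defs.
Context {R : realType} {X : metricType R}.

Definition complete_space : Prop :=
  forall F : set_system X, ProperFilter F -> cauchy F -> exists x : X, F --> x.

Definition exc_dist (B C : set X) : R :=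
  sup [set inf [set mdist b c | c in C] | b in B].

Definition hausdorff_dist (B C : set X) : R :=
  Num.max (exc_dist B C) (exc_dist C B).

Definition lipschitz_map (f : X -> X) : Prop :=
  exists k : R, forall x y, mdist (f x) (f y) <= k * mdist x y.

Definition Lip (f : X -> X) : R :=
  sup [set q : R | exists x y : X, x <> y /\ q = mdist (f x) (f y) / mdist x y].

Definition fam_map (n : nat) (f : 'I_n -> X -> X) (A : set X) : set X :=
  \bigcup_(r in [set: 'I_n]) (f r @` A).

Definition fam_lip (n : nat) (f : 'I_n -> X -> X) : R :=
  \big[Num.max/0]_(r < n) Lip (f r).

Fixpoint Phi (F : nat -> set X -> set X) (k : nat) (A : set X) : set X :=
  if k is k'.+1 then F k (Phi F k' A) else A.

Fixpoint Psi (F : nat -> set X -> set X) (k : nat) (A : set X) : set X :=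
  if k is k'.+1 then Psi F k' (F k A) else A.

End Defs.
Arguments complete_space {R} X.

(* Main.v *)
Require Import Defs.
From HB Require Import structures.
From mathcomp Require Import all_boot all_order all_algebra.
From mathcomp Require Import all_classical all_reals all_analysis.
From mathcomp Require Import lra.
Import Order.TTheory GRing.Theory Num.Theory.
Import numFieldNormedType.Exports.
Local Open Scope classical_set_scope.
Local Open Scope ring_scope.
Section S.
Context {R : realType} {X : metricType R}.

Lemma mdist_cont (x0 : X) : continuous (fun x : X => (mdist x0 x : R)).
Proof.
move=> x; apply/cvgrPdist_lt => e e0.
have Hb := nbhsx_ballx x e e0.
near=> y.
have : ball x e y by near: y.
rewrite ballEmdist /= => hxy.
have h1 := metric_triangle x0 x y.
have h2 := metric_triangle x0 y x.
rewrite metric_sym in hxy.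
have h3 : mdist y x = mdist x y by rewrite metric_sym.
rewrite ltr_norml; apply/andP; split; lra.
Unshelve. all: by end_near.
Qed.

Definition bnd (A : set X) := exists x0 M, forall a, A a -> mdist x0 a <= M.

Lemma cpt_bnd (A : set X) : compact A -> A !=set0 -> bnd A.
Proof.
move=> cA [x0 Ax0].
have cI : compact ((fun x : X => (mdist x0 x : R)) @` A).
  apply: continuous_compact => //; apply: continuous_subspaceT => x.
  exact: mdist_cont.
have [M [_ HM]] := compact_bounded cI.
exists x0, (M + 1) => a Aa.
have hM1 : M < M + 1 by rewrite ltrDl.
have := HM (M + 1) hM1 (mdist x0 a) (ex_intro2 _ _ a Aa erefl).
by move/(le_trans (ler_norm _)).
Qed.

Lemma Lip_le (g : X -> X) : lipschitz_map g ->
  forall x y, mdist (g x) (g y) <= Lip g * mdist x y.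
Proof.
move=> [k hk] x y.
have [->|nxy] := eqVneq x y; first by rewrite !mdistxx mulr0.
have dpos : 0 < mdist x y by rewrite mdist_gt0.
have : mdist (g x) (g y) / mdist x y <= Lip g.
  apply: sup_upper_bound; last by exists x, y; split => //; apply/eqP.
  split; first by exists (mdist (g x) (g y) / mdist x y), x, y; split => //; apply/eqP.
  exists k => q [u [v [uv ->]]].
  have up : 0 < mdist u v by rewrite mdist_gt0; apply/eqP.
  by rewrite ler_pdivrMr.
by rewrite ler_pdivrMr.
Qed.

Lemma fam_lip_ge {n} (g : 'I_n -> X -> X) r : Lip (g r) <= fam_lip g.
Proof. exact: (le_bigmax 0 (fun r => Lip (g r)) r). Qed.

Lemma fam_lip_ge0 {n} (g : 'I_n -> X -> X) : 0 <= fam_lip g.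
Proof. exact: bigmax_ge_id. Qed.

Lemma fam_ne {n} (g : 'I_n -> X -> X) {A} : (0 < n)%N -> A !=set0 -> fam_map g A !=set0.
Proof.
move=> n0 [a Aa]; exists (g (Ordinal n0) a); exists (Ordinal n0) => //; exists a => //.
Qed.

Lemma fam_bnd {n} (g : 'I_n -> X -> X) {L A} : 0 <= L ->
  (forall r x y, mdist (g r x) (g r y) <= L * mdist x y) ->
  bnd A -> bnd (fam_map g A).
Proof.
move=> L0 hL [x0 [M HM]].
exists x0, (\big[Num.max/0]_r mdist x0 (g r x0) + L * M).
move=> _ [r _ [a Aa <-]].
apply: le_trans (metric_triangle x0 (g r x0) (g r a)) _.
apply: lerD; first exact: (le_bigmax 0 (fun r => mdist x0 (g r x0)) r).
exact: le_trans (hL r x0 a) (ler_wpM2l L0 (HM a Aa)).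
Qed.

Lemma inf_le_d (b : X) {c : X} {C : set X} : C c ->
  inf [set mdist b c | c in C] <= mdist b c.
Proof.
move=> Cc; apply: ge_inf; last by exists c.
by exists 0 => _ [z _ <-]; exact: mdist_ge0.
Qed.

Lemma inf_ge0 (b : X) {C : set X} : C !=set0 ->
  0 <= inf [set mdist b c | c in C].
Proof.
move=> [c Cc]; apply: lb_le_inf; first by exists (mdist b c), c.
by move=> _ [z _ <-]; exact: mdist_ge0.
Qed.

Lemma exc_hs {B C : set X} : B !=set0 -> C !=set0 -> bnd B -> bnd C ->
  has_sup [set inf [set mdist b c | c in C] | b in B].
Proof.
move=> [b0 Bb0] [c0 Cc0] [x0 [M HM]] [x1 [M' HM']].
split; first by exists (inf [set mdist b0 c | c in C]), b0.
exists (M + mdist x0 x1 + M') => _ [b Bb <-].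
apply: le_trans (inf_le_d b Cc0) _.
apply: le_trans (metric_triangle b x0 c0) _.
have h1 := HM b Bb; have h2 := HM' c0 Cc0.
have h3 := metric_triangle x0 x1 c0.
have h4 : mdist b x0 = mdist x0 b by rewrite metric_sym.
lra.
Qed.

Lemma exc_ge0 {B C : set X} : B !=set0 -> C !=set0 -> bnd B -> bnd C ->
  0 <= exc_dist B C.
Proof.
move=> B0 C0 bB bC; have [b0 Bb0] := B0.
apply: le_trans (inf_ge0 b0 C0) _.
by rewrite /exc_dist; apply: (sup_upper_bound (exc_hs B0 C0 bB bC)); exists b0.
Qed.

Lemma exc_fam {n} {g : 'I_n -> X -> X} {L} {B C : set X} : (0 < n)%N -> 0 <= L ->
  (forall r x y, mdist (g r x) (g r y) <= L * mdist x y) ->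
  B !=set0 -> C !=set0 -> bnd B -> bnd C ->
  exc_dist (fam_map g B) (fam_map g C) <= L * exc_dist B C.
Proof.
move=> n0 L0 hL B0 C0 bB bC.
apply: ge_sup.
  have [y Hy] := fam_ne g n0 B0.
  by exists (inf [set mdist y c | c in fam_map g C]), y.
move=> _ [y [r _ [b Bb <-]] <-].
have h1 : inf [set mdist b c | c in C] <= exc_dist B C.
  by rewrite /exc_dist; apply: (sup_upper_bound (exc_hs B0 C0 bB bC)); exists b.
apply: le_trans (ler_wpM2l L0 h1).
have [c0 Cc0] := C0.
have Fc : forall c, C c -> fam_map g C (g r c).
  by move=> c Cc; exists r => //; exists c.
move: L0; rewrite le0r => /orP[/eqP L0|Lp].
  apply: le_trans (inf_le_d (g r b) (Fc c0 Cc0)) _.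
  by apply: le_trans (hL r b c0) _; rewrite L0 !mul0r.
rewrite -ler_pdivrMl //.
apply: lb_le_inf; first by exists (mdist b c0), c0.
move=> _ [c Cc <-]; rewrite ler_pdivrMl //.
exact: le_trans (inf_le_d (g r b) (Fc c Cc)) (hL r b c).
Qed.

Lemma haus_ge0 {B C : set X} : B !=set0 -> C !=set0 -> bnd B -> bnd C ->
  0 <= hausdorff_dist B C.
Proof.
move=> B0 C0 bB bC; rewrite /hausdorff_dist le_max.
by rewrite exc_ge0.
Qed.

Lemma haus_fam {n} {g : 'I_n -> X -> X} {L} {B C : set X} : (0 < n)%N -> 0 <= L ->
  (forall r x y, mdist (g r x) (g r y) <= L * mdist x y) ->
  B !=set0 -> C !=set0 -> bnd B -> bnd C ->
  hausdorff_dist (fam_map g B) (fam_map g C) <= L * hausdorff_dist B C.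
Proof.
move=> n0 L0 hL B0 C0 bB bC; rewrite /hausdorff_dist ge_max; apply/andP; split.
  apply: le_trans (exc_fam n0 L0 hL B0 C0 bB bC) _.
  by apply: ler_wpM2l => //; rewrite le_max lexx.
apply: le_trans (exc_fam n0 L0 hL C0 B0 bC bB) _.
by apply: ler_wpM2l => //; rewrite le_max lexx orbT.
Qed.

End S.

Theorem mainTheorem5 (R : realType) (X : metricType R)
  (n : nat -> nat) (f : forall i : nat, 'I_(n i) -> X -> X) :
  complete_space X ->
  (forall i, (1 <= i)%N -> (0 < n i)%N) ->
  (forall i (r : 'I_(n i)), (1 <= i)%N -> lipschitz_map (f i r)) ->
  (fun k : nat => \prod_(1 <= i < k.+1) fam_lip (f i)) @ \oo --> (0 : R) ->
  forall A B : set X,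
    compact A -> A !=set0 -> compact B -> B !=set0 ->
    (fun k : nat => hausdorff_dist (Phi (fun i => fam_map (f i)) k A)
                                   (Phi (fun i => fam_map (f i)) k B)) @ \oo --> (0 : R)
    /\
    (fun k : nat => hausdorff_dist (Psi (fun i => fam_map (f i)) k A)
                                   (Psi (fun i => fam_map (f i)) k B)) @ \oo --> (0 : R).
Proof.
move=> _ hn hlip hP A B cA A0 cB B0.
set F := fun i => fam_map (f i).
set P := fun k : nat => \prod_(1 <= i < k.+1) fam_lip (f i).
have bA := cpt_bnd _ cA A0; have bB := cpt_bnd _ cB B0.
have hL : forall i, (1 <= i)%N -> forall r x y,
    mdist (f i r x) (f i r y) <= fam_lip (f i) * mdist x y.
  move=> i i1 r x y; apply: le_trans (Lip_le _ (hlip i r i1) x y) _.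
  by apply: ler_wpM2r; [exact: mdist_ge0 | exact: fam_lip_ge].
have P0 : forall k, 0 <= P k.
  by move=> k; apply: prodr_ge0 => i _; exact: fam_lip_ge0.
have PS : forall k, P k.+1 = P k * fam_lip (f k.+1).
  by move=> k; rewrite /P big_nat_recr.
have P1 : P 0%N = 1 by rewrite /P big_geq.
have step : forall i C, (1 <= i)%N -> C !=set0 -> bnd C -> F i C !=set0 /\ bnd (F i C).
  move=> i C i1 C0 bC; split; first exact: fam_ne _ (hn i i1) C0.
exact: fam_bnd _ (fam_lip_ge0 _) (hL i i1) bC.
have hstep : forall i C D, (1 <= i)%N -> C !=set0 -> bnd C -> D !=set0 -> bnd D ->
    hausdorff_dist (F i C) (F i D) <= fam_lip (f i) * hausdorff_dist C D.
  move=> i C D i1 C0 bC D0 bD.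
  rewrite /F; exact: haus_fam (hn i i1) (fam_lip_ge0 _) (hL i i1) C0 D0 bC bD.
have PhiN : forall k C, C !=set0 -> bnd C ->
    Phi F k C !=set0 /\ bnd (Phi F k C).
  elim=> [|k IH] C C0 bC //=.
  have [h1 h2] := IH C C0 bC; exact: step.
have PsiN : forall k C, C !=set0 -> bnd C ->
    Psi F k C !=set0 /\ bnd (Psi F k C).
  elim=> [|k IH] C C0 bC //=.
  have [h1 h2] := step k.+1 C isT C0 bC; exact: IH.
have PhiH : forall k, hausdorff_dist (Phi F k A) (Phi F k B)
    <= P k * hausdorff_dist A B.
  elim=> [|k IH] /=; first by rewrite P1 mul1r.
  have [a1 a2] := PhiN k A A0 bA; have [b1 b2] := PhiN k B B0 bB.
  apply: le_trans (hstep k.+1 _ _ isT a1 a2 b1 b2) _.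
  apply: le_trans (ler_wpM2l (fam_lip_ge0 _) IH) _.
  by rewrite PS mulrA (mulrC (fam_lip _)).
have PsiH : forall k C D, C !=set0 -> bnd C -> D !=set0 -> bnd D ->
    hausdorff_dist (Psi F k C) (Psi F k D) <= P k * hausdorff_dist C D.
  elim=> [|k IH] C D C0 bC D0 bD /=; first by rewrite P1 mul1r.
  have [c1 c2] := step k.+1 C isT C0 bC; have [d1 d2] := step k.+1 D isT D0 bD.
  apply: le_trans (IH _ _ c1 c2 d1 d2) _.
  apply: le_trans (ler_wpM2l (P0 k) (hstep k.+1 _ _ isT C0 bC D0 bD)) _.
  by rewrite PS mulrA.
have lim : (fun k => hausdorff_dist A B * P k) @ \oo --> (0 : R).
  by rewrite -(mulr0 (hausdorff_dist A B)); apply: cvgMl_tmp.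
split.
  apply: (@squeeze_cvgr _ _ _ _ (fun=> 0) (fun k => hausdorff_dist A B * P k)); last exact: lim; last exact: cvg_cst.
  near=> k; apply/andP; split.
    have [a1 a2] := PhiN k A A0 bA; have [b1 b2] := PhiN k B B0 bB.
    exact: haus_ge0.
  by rewrite mulrC; exact: PhiH.
apply: (@squeeze_cvgr _ _ _ _ (fun=> 0) (fun k => hausdorff_dist A B * P k)); last exact: lim; last exact: cvg_cst.
near=> k; apply/andP; split.
  have [a1 a2] := PsiN k A A0 bA; have [b1 b2] := PsiN k B B0 bB.
  exact: haus_ge0.
by rewrite mulrC; exact: PsiH.
Unshelve. all: by end_near.
Qed.
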